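(* Let $\Omega\subset\mathbb{R}^2$ be a bounded domain, let $\mu_1,\mu_4,\mu_5\in\mathbb{R}$ and $\lambda,\gamma,\varepsilon>0$. Let ${\boldsymbol U}_h\subset H^1(\Omega)^2$, $P_h\subset L^2(\Omega)$, $\Phi_h\subset H^1(\Omega)$, $\Psi_h\subset H^1(\Omega)$ be finite-dimensional (conforming finite element) spaces, and set ${\boldsymbol U}_{h0}={\boldsymbol U}_h\cap H^1_0(\Omega)^2$, $P_{h0}=P_h\cap L^2_0(\Omega)$. Let $I$ be a time interval and let $t\mapsto({\boldsymbol u}(t),p(t),\phi(t),\psi(t))\in {\boldsymbol U}_{h0}\times P_{h0}\times\Phi_h\times\Psi_h$ be a solution on $I$ (with ${\boldsymbol u},\phi,\psi$ continuously differentiable in $t$) of the space-discrete scheme: for all $t\in I$ and all $(\bar{\boldsymbol u},\bar p,\bar\phi,\bar\psi)\in {\boldsymbol U}_{h0}\times P_{h0}\times\Phi_h\times\Psi_h$, $$\big({\boldsymbol u}_t,\bar{\boldsymbol u}\big)+c\big({\boldsymbol u},{\boldsymbol u},\bar{\boldsymbol u}\big)+\big(\sigma^d(D({\boldsymbol u}),\nabla\phi),D(\bar{\boldsymbol u})\big)-\big(p,\nabla\cdot\bar{\boldsymbol u}\big)+\frac{\lambda}{\gamma}\big((\phi_t+{\boldsymbol u}\cdot\nabla\phi)\nabla\phi,\bar{\boldsymbol u}\big)=0,$$ $$\big(\nabla\cdot{\boldsymbol u},\bar p\big)=0,$$ $$\frac1\gamma\big(\phi_t+{\boldsymbol u}\cdot\nabla\phi,\bar\phi\big)+\big(\nabla\psi,\nabla\bar\phi\big)+\frac{1}{\varepsilon^2}\big({\boldsymbol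 f}(\nabla\phi),\nabla\bar\phi\big)=0,$$ $$\big(\nabla\phi,\nabla\bar\psi\big)-\big(\psi,\bar\psi\big)=0.$$ Then for all $t\in I$, $$\frac{d}{dt}E_{tot}\big({\boldsymbol u}(t),\nabla\phi(t),\psi(t)\big)+\big(\sigma^d(D({\boldsymbol u}(t)),\nabla\phi(t)),D({\boldsymbol u}(t))\big)+\frac{\lambda}{\gamma}\big\|\phi_t(t)+{\boldsymbol u}(t)\cdot\nabla\phi(t)\big\|_{L^2}^2=0.$$
   Context: $(\cdot,\cdot)$ denotes the $L^2(\Omega)$ inner product (for scalars, vectors or matrices). $D({\boldsymbol u})=(\nabla{\boldsymbol u}+\nabla{\boldsymbol u}^t)/2$. For ${\boldsymbol n}\in\mathbb{R}^2$, $F({\boldsymbol n})=\frac14(|{\boldsymbol n}|^2-1)^2$ and ${\boldsymbol f}({\boldsymbol n})=\nabla_{\boldsymbol n}F({\boldsymbol n})=(|{\boldsymbol n}|^2-1){\boldsymbol n}$. The dissipative tensor is $\sigma^d(D({\boldsymbol u}),{\boldsymbol n})=\mu_1({\boldsymbol n}^tD({\boldsymbol u}){\boldsymbol n})\,{\boldsymbol n}\otimes{\boldsymbol n}+\mu_4D({\boldsymbol u})+\mu_5\big(D({\boldsymbol u}){\boldsymbol n}\otimes{\boldsymbol n}+{\boldsymbol n}\otimes D({\boldsymbol u}){\boldsymbol n}\big)$. The trilinear form is $c({\boldsymbol u},{\boldsymbol v},{\boldsymbol w})=(({\boldsymbol u}\cdot\nabla){\boldsymbol v},{\boldsymbol w})+\frac12((\nabla\cdot{\boldsymbol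 u}){\boldsymbol v},{\boldsymbol w})$. The total energy is $E_{tot}({\boldsymbol u},\nabla\phi,\psi)=\frac12\|{\boldsymbol u}\|_{L^2}^2+\lambda\big(\frac12\|\psi\|_{L^2}^2+\frac{1}{\varepsilon^2}\int_\Omega F(\nabla\phi)\big)$. *)

(* Defs.v *)
Set Warnings "-notation-overridden,-ambiguous-paths,-notation-incompatible-prefix".
From HB Require Import structures.
From mathcomp Require Import all_boot all_order all_algebra.
From mathcomp Require Import all_classical all_reals all_analysis.
Set Implicit Arguments.
Unset Strict Implicit.
Unset Printing Implicit Defensive.
Import Order.TTheory GRing.Theory Num.Theory.
Import numFieldNormedType.Exports.
Local Open Scope classical_set_scope.
Local Open Scope ring_scope.

Section Defs.
Variable R : realType.

Definition T2 := (measurableTypeR R * measurableTypeR R)%type.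
Definition lam2 := ((@lebesgue_measure R) \x (@lebesgue_measure R))%E.

Definition integ (D : set T2) (f : T2 -> R) : R := Rintegral lam2 D f.

Definition vdot (a b : 'rV[R]_2) : R := \sum_(i < 2) a 0 i * b 0 i.
Definition mdot (A B : 'M[R]_2) : R := \sum_(i < 2) \sum_(j < 2) A i j * B i j.

Definition e2 (i : 'I_2) : R * R := if i == ord0 then (1, 0) else (0, 1).
Definition partial (i : 'I_2) (f : R * R -> R) : R * R -> R :=
  fun x => 'D_(e2 i) f x.
Fixpoint iterD (s : seq 'I_2) (f : R * R -> R) : R * R -> R :=
  match s with [::] => f | i :: s' => partial i (iterD s' f) end.

Definition smooth (f : R * R -> R) : Prop :=
  forall s : seq 'I_2, continuous (iterD s f) /\
    forall (i : 'I_2) (x : R * R), derivable (iterD s f) x (e2 i).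

Definition test_fun (Om : set (R * R)) (f : R * R -> R) : Prop :=
  smooth f /\ exists K : set (R * R), compact K /\ K `<=` Om /\
    forall x, ~ K x -> f x = 0.

Definition weak_partial (Om : set (R * R)) (f : R * R -> R) (i : 'I_2)
    (g : R * R -> R) : Prop :=
  forall phi, test_fun Om phi ->
    integ Om (fun x => f x * partial i phi x) = - integ Om (fun x => g x * phi x).

Definition bdd_on (Om : set (R * R)) (f : R * R -> R) : Prop :=
  exists M : R, forall x, Om x -> `|f x| <= M.

Definition meas_on (Om : set (R * R)) (f : R * R -> R) : Prop :=
  @measurable_fun _ _ T2 R Om f.

Definition L2 (Om : set (R * R)) (f : R * R -> R) : Prop :=
  meas_on Om f /\ (\int[lam2]_(x in Om) ((f x) ^+ 2)%:E < +oo)%E.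

(* a scalar W^{1,oo}(Om) (hence H^1(Om)) function b with weak gradient g *)
Definition fe_scalar (Om : set (R * R)) (b : R * R -> R)
    (g : R * R -> 'rV[R]_2) : Prop :=
  meas_on Om b /\ bdd_on Om b /\
  forall i : 'I_2, meas_on Om (fun x => g x 0 i) /\
    bdd_on Om (fun x => g x 0 i) /\ weak_partial Om b i (fun x => g x 0 i).

(* a vector W^{1,oo}(Om)^2 function u with weak Jacobian J, J c i = d_i u_c *)
Definition fe_vector (Om : set (R * R)) (u : R * R -> 'rV[R]_2)
    (J : R * R -> 'M[R]_2) : Prop :=
  forall c : 'I_2, fe_scalar Om (fun x => u x 0 c) (fun x => row c (J x)).

Definition H10 (Om : set (R * R)) (u : R * R -> 'rV[R]_2)
    (J : R * R -> 'M[R]_2) : Prop :=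
  exists phi : nat -> 'I_2 -> R * R -> R,
    (forall n c, test_fun Om (phi n c)) /\
    forall c : 'I_2,
      ((fun n => integ Om (fun x => (phi n c x - u x 0 c) ^+ 2)) @ \oo --> 0) /\
      forall i : 'I_2,
      ((fun n => integ Om (fun x => (partial i (phi n c) x - J x c i) ^+ 2))
          @ \oo --> 0).

Definition mean_zero (Om : set (R * R)) (p : R * R -> R) : Prop :=
  integ Om p = 0.

Definition lcs n (a : 'I_n -> R) (b : 'I_n -> R * R -> R) : R * R -> R :=
  fun x => \sum_(k < n) a k * b k x.
Definition lcv n m p (a : 'I_n -> R) (b : 'I_n -> R * R -> 'M[R]_(m, p)) :
    R * R -> 'M[R]_(m, p) :=
  fun x => \sum_(k < n) a k *: b k x.

Definition C1_on (I : set R) (a : R -> R) : Prop :=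
  (forall t, I t -> derivable a t 1) /\ {in I, continuous (derive1 a)}.

Definition symgrad (J : 'M[R]_2) : 'M[R]_2 := 2^-1 *: (J + J^T).
Definition tens (a b : 'rV[R]_2) : 'M[R]_2 := a^T *m b.  (* a (x) b = a b^T *)
Definition sigma_d (mu1 mu4 mu5 : R) (D : 'M[R]_2) (n : 'rV[R]_2) : 'M[R]_2 :=
  (mu1 * (n *m D *m n^T) 0 0) *: tens n n + mu4 *: D
  + mu5 *: (tens (n *m D^T) n + tens n (n *m D^T)).
Definition Fpot (n : 'rV[R]_2) : R := 4^-1 * (vdot n n - 1) ^+ 2.
Definition fpot (n : 'rV[R]_2) : 'rV[R]_2 := (vdot n n - 1) *: n.

(* ((u . grad) v) for J = Jacobian of v: components sum_j u_j d_j v_i *)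
Definition convec (u : 'rV[R]_2) (J : 'M[R]_2) : 'rV[R]_2 := u *m J^T.

Definition ctri (Om : set (R * R)) (u : R * R -> 'rV[R]_2)
    (Ju : R * R -> 'M[R]_2) (v : R * R -> 'rV[R]_2) (Jv : R * R -> 'M[R]_2)
    (w : R * R -> 'rV[R]_2) : R :=
  integ Om (fun x => vdot (convec (u x) (Jv x)) (w x))
  + 2^-1 * integ Om (fun x => \tr (Ju x) * vdot (v x) (w x)).

Definition Etot (Om : set (R * R)) (lambda eps : R) (u : R * R -> 'rV[R]_2)
    (gphi : R * R -> 'rV[R]_2) (psi : R * R -> R) : R :=
  2^-1 * integ Om (fun x => vdot (u x) (u x))
  + lambda * (2^-1 * integ Om (fun x => psi x ^+ 2)
              + (eps ^+ 2)^-1 * integ Om (fun x => Fpot (gphi x))).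

End Defs.

(* Main.v *)
Require Import Defs.
Set Warnings "-notation-overridden,-ambiguous-paths,-notation-incompatible-prefix".
From HB Require Import structures.
From mathcomp Require Import all_boot all_order all_algebra.
From mathcomp Require Import all_classical all_reals all_analysis.
From mathcomp Require Import ring lra.
Import Order.TTheory GRing.Theory Num.Theory.
Import numFieldNormedType.Exports.
Local Open Scope classical_set_scope.
Local Open Scope ring_scope.
Set Implicit Arguments.
Unset Strict Implicit.
Unset Printing Implicit Defensive.

Section S.
Variable R : realType.

Definition qbox (A : set (R * R)) (q1 q2 q3 q4 : rat) : set (R * R) :=
  let B := (`]ratr q1, ratr q2[%classic) `*` (`]ratr q3, ratr q4[%classic) in
  if pselect (B `<=` A) then B else set0.

Lemma ratitv (a b : R) : a < b -> exists q : rat, a < ratr q /\ ratr q < b.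
Proof. by move=> /rat_in_itvoo [q]; rewrite in_itv /= => /andP[]; exists q. Qed.

Lemma open_meas (A : set (R * R)) : open A -> measurable (A : set (T2 R)).
Proof.
move=> oA.
have -> : A = \bigcup_(q : rat * rat * rat * rat) qbox A q.1.1.1 q.1.1.2 q.1.2 q.2.
  apply/seteqP; split; last first.
    move=> x [[[[q1 q2] q3] q4] _]; rewrite /qbox /=.
    by case: pselect => [H /H|].
  move=> x Ax.
  have := oA x Ax; move=> /nbhs_ballP [e /= e0 He].
  have [q1 [h1 h1']] : exists q : rat, x.1 - e < ratr q /\ ratr q < x.1.
    by apply: ratitv; rewrite ltrBlDr ltrDl.
  have [q2 [h2 h2']] : exists q : rat, x.1 < ratr q /\ ratr q < x.1 + e.
    by apply: ratitv; rewrite ltrDl.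
  have [q3 [h3 h3']] : exists q : rat, x.2 - e < ratr q /\ ratr q < x.2.
    by apply: ratitv; rewrite ltrBlDr ltrDl.
  have [q4 [h4 h4']] : exists q : rat, x.2 < ratr q /\ ratr q < x.2 + e.
    by apply: ratitv; rewrite ltrDl.
  exists (q1, q2, q3, q4) => //.
  rewrite /qbox /=; case: pselect => /= H; last first.
    exfalso; apply: H => -[a b] [/= Ha Hb]; apply: He.
    move: Ha Hb; rewrite !in_itv /= => /andP[a1 a2] /andP[b1 b2].
    split; rewrite /ball /= ltr_norml; apply/andP; split; lra.
  by split; rewrite /= in_itv /=; apply/andP; split.
have mq : forall q : rat * rat * rat * rat,
    measurable (qbox A q.1.1.1 q.1.1.2 q.1.2 q.2 : set (T2 R)).
  move=> q; rewrite /qbox; case: pselect => H; last exact: measurable0.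
  by apply: measurableX; exact: measurable_itv.
exact: (countable_bigcupT_measurable (countableP _) mq).
Qed.

Lemma cont_meas (Om : set (R * R)) (f : R * R -> R) :
  continuous f -> meas_on Om f.
Proof.
move=> cf mOm; apply: (measurability _ (measurable_realfun.RGenOpens.measurableE R)) => //.
move=> _ [_ [a [b ->] <-]]; apply: measurableI => //.
apply: open_meas; move/continuousP : cf; apply.
exact: interval_open.
Qed.

Lemma cont_bdd (Om : set (R * R)) (f : R * R -> R) :
  (exists M : R, forall x, Om x -> `|x.1| <= M /\ `|x.2| <= M) ->
  continuous f -> bdd_on Om f.
Proof.
move=> [M HM] cf.
have cK : compact (`[-M, M]%classic `*` `[-M, M]%classic : set (R * R)).
  by apply: compact_setX; exact: segment_compact.
have := compact_bounded (continuous_compact (continuous_subspaceT cf) cK).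
move=> [N [_ HN]]; exists (`|N| + 1) => x Ox.
apply: (HN (`|N| + 1)); first by rewrite ltr_pwDr// ler_norm.
exists x => //; have [h1 h2] := HM x Ox.
by split; rewrite /= in_itv /= -ler_norml.
Qed.
End S.

Lemma lam2_fin (R : realType) (Om : set (R * R)) :
  (exists M : R, forall x, Om x -> `|x.1| <= M /\ `|x.2| <= M) ->
  measurable (Om : set (T2 R)) -> (lam2 Om < +oo)%E.
Proof.
move=> [M HM] mOm.
have mB : measurable (`[-M, M]%classic `*` `[-M, M]%classic : set (T2 R)).
  by apply: measurableX; exact: measurable_itv.
apply: (@le_lt_trans _ _ (lam2 (`[-M, M]%classic `*` `[-M, M]%classic : set (T2 R)))).
  apply: le_measure; rewrite ?inE //.
  move=> x Ox; have [h1 h2] := HM x Ox.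
  by split; rewrite /= in_itv /= -ler_norml.
rewrite /lam2 product_measure1E; try exact: measurable_itv.
pose B : set R := `[-M, M]%classic.
have E : (lebesgue_measure B < +oo)%E.
  rewrite /B lebesgue_measure_itv /=; case: ifP => _; rewrite ?ltry //.

apply: lte_mul_pinfty => //; rewrite ge0_fin_numE //.
Qed.

Section Int.
Variable R : realType.
Variable Om : set (R * R).
Hypothesis mOm : measurable (Om : set (T2 R)).
Hypothesis fOm : (lam2 Om < +oo)%E.

Definition good (f : R * R -> R) := meas_on Om f /\ bdd_on Om f.

Lemma good_int f : good f -> (@lam2 R).-integrable (Om : set (T2 R)) (EFin \o f).
Proof.
move=> [mf [M HM]]; apply: measurable_bounded_integrable => //.
exists M; split; first exact: num_real.
move=> M' HM' x Ox; apply: le_trans (HM x Ox) _; exact: ltW.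
Qed.

Lemma good_cst c : good (fun _ => c).
Proof. by split; [exact: measurable_cst| exists `|c|]. Qed.

Lemma good_add f g : good f -> good g -> good (fun x => f x + g x).
Proof.
move=> [mf [M HM]] [mg [N HN]]; split; first exact: measurable_realfun.measurable_funD.
exists (M + N) => x Ox; apply: le_trans (ler_normD _ _) _.
by apply: lerD; [exact: HM|exact: HN].
Qed.

Lemma good_opp f : good f -> good (fun x => - f x).
Proof.
move=> [mf [M HM]]; split; first exact: measurable_realfun.measurable_funN.
by exists M => x Ox; rewrite normrN; exact: HM.
Qed.

Lemma good_sub f g : good f -> good g -> good (fun x => f x - g x).
Proof. by move=> gf gg; apply: good_add => //; exact: good_opp. Qed.

Lemma good_mul f g : good f -> good g -> good (fun x => f x * g x).
Proof.
move=> [mf [M HM]] [mg [N HN]]; split; first exact: measurable_realfun.measurable_funM.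
exists (M * N) => x Ox; rewrite normrM; apply: ler_pM => //.
by apply: HM. by apply: HN.
Qed.

Lemma good_sum (I : Type) (r : seq I) (F : I -> R * R -> R) :
  (forall i, good (F i)) -> good (fun x => \sum_(i <- r) F i x).
Proof.
move=> gF; elim: r => [|i r IH].
  by under [fun x => _]funext do rewrite big_nil; exact: good_cst.
under [fun x => _]funext do rewrite big_cons.
exact: good_add.
Qed.

Lemma integ_ext f g : (forall x, Om x -> f x = g x) -> integ Om f = integ Om g.
Proof. by move=> fg; apply: eq_Rintegral => x /set_mem; exact: fg. Qed.

Lemma integD f g : good f -> good g ->
  integ Om (fun x => f x + g x) = integ Om f + integ Om g.
Proof. by move=> gf gg; apply: RintegralD => //; exact: good_int. Qed.

Lemma integB f g : good f -> good g ->
  integ Om (fun x => f x - g x) = integ Om f - integ Om g.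
Proof. by move=> gf gg; apply: RintegralB => //; exact: good_int. Qed.

Lemma integZ k f : good f -> integ Om (fun x => k * f x) = k * integ Om f.
Proof. by move=> gf; apply: RintegralZl => //; exact: good_int. Qed.

Lemma integN f : good f -> integ Om (fun x => - f x) = - integ Om f.
Proof.
move=> gf; rewrite -mulN1r -integZ //; apply: integ_ext => x _; ring.
Qed.

Lemma integ_sum (I : Type) (r : seq I) (F : I -> R * R -> R) :
  (forall i, good (F i)) ->
  integ Om (fun x => \sum_(i <- r) F i x) = \sum_(i <- r) integ Om (F i).
Proof.
move=> gF; elim: r => [|i r IH].
  rewrite big_nil -[RHS](_ : integ Om (fun _ => 0) = 0).
    by apply: integ_ext => x _; rewrite big_nil.
  by rewrite /integ Rintegral_cst // mul0r.
rewrite big_cons -IH -integD //; last exact: good_sum.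
by apply: integ_ext => x _; rewrite big_cons.
Qed.

Lemma integ0 : integ Om (fun _ => 0) = 0.
Proof. by rewrite /integ Rintegral_cst // mul0r. Qed.

Lemma integ_cst c : integ Om (fun _ => c) = c * fine (lam2 Om).
Proof. by rewrite /integ Rintegral_cst. Qed.

Lemma integ_le f g : good f -> good g -> (forall x, Om x -> f x <= g x) ->
  integ Om f <= integ Om g.
Proof. by move=> gf gg fg; apply: le_Rintegral => //; exact: good_int. Qed.

Lemma integ_abs f : good f -> `|integ Om f| <= integ Om (fun x => `|f x|).
Proof. by move=> gf; apply: le_normr_Rintegral => //; exact: good_int. Qed.

End Int.
Section Wrap.
Variable R : realType.
Lemma dM2 (f g : R * R -> R) x v : derivable f x v -> derivable g x v ->
  derivable (fun y => f y * g y) x v.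
Proof. move=> df dg; exact: (@derivableM R _ f g x v df dg). Qed.
Lemma dD2 (f g : R * R -> R) x v : derivable f x v -> derivable g x v ->
  derivable (fun y => f y + g y) x v.
Proof. move=> df dg; exact: (@derivableD R _ _ f g x v df dg). Qed.
Lemma DM2 (f g : R * R -> R) x v : derivable f x v -> derivable g x v ->
  'D_v (fun y => f y * g y) x = 'D_v f x * g x + f x * 'D_v g x.
Proof.
move=> df dg; rewrite (@deriveM R _ f g x v df dg) /GRing.scale /=.
by rewrite addrC [g x * _]mulrC.
Qed.
Lemma DD2 (f g : R * R -> R) x v : derivable f x v -> derivable g x v ->
  'D_v (fun y => f y + g y) x = 'D_v f x + 'D_v g x.
Proof. move=> df dg; exact: (@deriveD R _ _ f g x v df dg). Qed.
Lemma dC2 (c : R) (x v : R * R) : derivable (fun _ : R * R => c) x v.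
Proof. exact: (@derivable_cst R _ _ c x v). Qed.
Lemma DC2 (c : R) (x v : R * R) : 'D_v (fun _ : R * R => c) x = 0.
Proof. exact: (@derive_cst R _ _ c x v). Qed.

Lemma dM1 (f g : R -> R) x : derivable f x 1 -> derivable g x 1 ->
  derivable (fun y => f y * g y) x 1.
Proof. move=> df dg; exact: (@derivableM R _ f g x 1 df dg). Qed.
Lemma dD1 (f g : R -> R) x : derivable f x 1 -> derivable g x 1 ->
  derivable (fun y => f y + g y) x 1.
Proof. move=> df dg; exact: (@derivableD R _ _ f g x 1 df dg). Qed.
Lemma DM1 (f g : R -> R) x : derivable f x 1 -> derivable g x 1 ->
  derive1 (fun y => f y * g y) x = derive1 f x * g x + f x * derive1 g x.
Proof.
move=> df dg; rewrite !derive1E (@deriveM R _ f g x 1 df dg) /GRing.scale /=.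
by rewrite addrC [g x * _]mulrC.
Qed.
Lemma DD1 (f g : R -> R) x : derivable f x 1 -> derivable g x 1 ->
  derive1 (fun y => f y + g y) x = derive1 f x + derive1 g x.
Proof. move=> df dg; rewrite !derive1E; exact: (@deriveD R _ _ f g x 1 df dg). Qed.
Lemma dC1 (c : R) (x : R) : derivable (fun _ : R => c) x 1.
Proof. exact: (@derivable_cst R _ _ c x 1). Qed.
Lemma DC1 (c : R) (x : R) : derive1 (fun _ : R => c) x = 0.
Proof. rewrite derive1E; exact: (@derive_cst R _ _ c x 1). Qed.
End Wrap.
Section Poly.
Variable R : realType.
Variable Om : set (R * R).
Hypothesis mOm : measurable (Om : set (T2 R)).
Hypothesis fOm : (lam2 Om < +oo)%E.
Variable t : R.

Definition PT := ((R -> R) * (R * R -> R))%type.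

Fixpoint wfl (L : seq PT) : Prop :=
  match L with
  | [::] => True
  | p :: L' => (derivable p.1 t 1 /\ good Om p.2) /\ wfl L'
  end.

Definition ev (L : seq PT) (s : R) (x : R * R) : R := \sum_(p <- L) p.1 s * p.2 x.
Definition dv (L : seq PT) (x : R * R) : R := \sum_(p <- L) derive1 p.1 t * p.2 x.

Lemma wfl_cat L1 L2 : wfl L1 -> wfl L2 -> wfl (L1 ++ L2).
Proof. by elim: L1 => [//|p L1 IH] /= [h1 h2] h3; split => //; exact: IH. Qed.

Definition pm (pq : PT * PT) : PT :=
  (fun s => pq.1.1 s * pq.2.1 s, fun x => pq.1.2 x * pq.2.2 x).
Definition lmul (L1 L2 : seq PT) : seq PT :=
  [seq pm pq | pq <- [seq (p, q) | p <- L1, q <- L2]].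

Lemma wfl_map (L : seq PT) (f : PT -> PT) :
  (forall p, derivable p.1 t 1 /\ good Om p.2 -> derivable (f p).1 t 1 /\ good Om (f p).2) ->
  wfl L -> wfl (map f L).
Proof. by move=> Hf; elim: L => [//|p L IH] /= [h1 h2]; split; [exact: Hf|exact: IH]. Qed.

Lemma wfl_lmul L1 L2 : wfl L1 -> wfl L2 -> wfl (lmul L1 L2).
Proof.
move=> h1 h2; rewrite /lmul; elim: L1 h1 => [//|p L1 IH] /= [[dp gp] h1].
rewrite map_cat; apply: wfl_cat; last exact: IH.
rewrite -map_comp; apply: wfl_map => // q [dq gq] /=; split.
  exact: (dM1 dp dq).
exact: good_mul.
Qed.

Lemma ev_lmul L1 L2 s x : ev (lmul L1 L2) s x = ev L1 s x * ev L2 s x.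
Proof.
rewrite /ev /lmul big_map big_allpairs mulr_suml; apply: eq_bigr => p _.
rewrite mulr_sumr; apply: eq_bigr => q _ /=; ring.
Qed.

Lemma dv_inner (p : PT) L2 x : derivable p.1 t 1 -> wfl L2 ->
  \sum_(q <- L2) derive1 (pm (p, q)).1 t * (pm (p, q)).2 x =
  \sum_(q <- L2) (derive1 p.1 t * p.2 x * (q.1 t * q.2 x)
                  + p.1 t * p.2 x * (derive1 q.1 t * q.2 x)).
Proof.
move=> dp; elim: L2 => [|q L2 IH2] /=; first by rewrite !big_nil.
move=> [[dq gq] h2]; rewrite !big_cons IH2 //; congr (_ + _) => /=.
by rewrite (DM1 dp dq); ring.
Qed.

Lemma dv_lmul L1 L2 x : wfl L1 -> wfl L2 ->
  dv (lmul L1 L2) x = dv L1 x * ev L2 t x + ev L1 t x * dv L2 x.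
Proof.
move=> h1 h2; rewrite /dv /ev /lmul big_map big_allpairs mulr_suml mulr_suml -big_split.
elim: L1 h1 => [|p L1 IH] /=; first by rewrite !big_nil.
move=> [[dp gp] h1]; rewrite !big_cons IH //; congr (_ + _).
rewrite dv_inner // big_split /= -mulr_sumr -mulr_sumr.
by congr (_ + _); rewrite mulrC.
Qed.

Definition dpoly (H : R -> R * R -> R) (H' : R * R -> R) : Prop :=
  exists L, [/\ wfl L, (forall s x, H s x = ev L s x) & (forall x, H' x = dv L x)].

Lemma dpoly_ext H1 H1' H2 H2' : dpoly H1 H1' ->
  (forall s x, H1 s x = H2 s x) -> (forall x, H1' x = H2' x) -> dpoly H2 H2'.
Proof.
move=> [L [wL e1 e2]] f1 f2; exists L; split => //.
  by move=> s x; rewrite -f1.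
by move=> x; rewrite -f2.
Qed.

Lemma dpoly_coef (c : R -> R) h : derivable c t 1 -> good Om h ->
  dpoly (fun s x => c s * h x) (fun x => derive1 c t * h x).
Proof.
by move=> dc gh; exists [:: (c, h)]; split => //= [s x|x]; rewrite /ev /dv big_seq1.
Qed.

Lemma dpoly_const h : good Om h -> dpoly (fun _ x => h x) (fun _ => 0).
Proof.
move=> gh; exists [:: ((fun _ => 1), h)]; split.
- by split => //; split => //; exact: dC1.
- by move=> s x; rewrite /ev big_seq1 /= mul1r.
- by move=> x; rewrite /dv big_seq1 /= (@DC1 _ 1 t) mul0r.
Qed.

Lemma dpoly_add H1 H1' H2 H2' : dpoly H1 H1' -> dpoly H2 H2' ->
  dpoly (fun s x => H1 s x + H2 s x) (fun x => H1' x + H2' x).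
Proof.
move=> [L1 [w1 e1 f1]] [L2 [w2 e2 f2]]; exists (L1 ++ L2); split.
- exact: wfl_cat.
- by move=> s x; rewrite /ev big_cat e1 e2.
- by move=> x; rewrite /dv big_cat f1 f2.
Qed.

Lemma dpoly_mul H1 H1' H2 H2' : dpoly H1 H1' -> dpoly H2 H2' ->
  dpoly (fun s x => H1 s x * H2 s x) (fun x => H1' x * H2 t x + H1 t x * H2' x).
Proof.
move=> [L1 [w1 e1 f1]] [L2 [w2 e2 f2]]; exists (lmul L1 L2); split.
- exact: wfl_lmul.
- by move=> s x; rewrite ev_lmul e1 e2.
- by move=> x; rewrite dv_lmul // f1 f2 e1 e2.
Qed.

Lemma dpoly_sum (I : Type) (r : seq I) (F : I -> R -> R * R -> R) F' :
  (forall i, dpoly (F i) (F' i)) ->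
  dpoly (fun s x => \sum_(i <- r) F i s x) (fun x => \sum_(i <- r) F' i x).
Proof.
move=> hF; elim: r => [|i r IH].
  apply: (@dpoly_ext (fun _ _ => 0) (fun _ => 0)).
  - by apply: dpoly_const; exact: good_cst.
  - by move=> s x; rewrite big_nil.
  - by move=> x; rewrite big_nil.
apply: dpoly_ext; first exact: (dpoly_add (hF i) IH).
- by move=> s x; rewrite big_cons.
- by move=> x; rewrite big_cons.
Qed.

Lemma good_ev L s : wfl L -> good Om (ev L s).
Proof.
rewrite /ev; elim: L => [_|p L IH] /=.
  by under [fun x => _]funext do rewrite big_nil; exact: good_cst.
move=> [[_ gp] wL]; under [fun x => _]funext do rewrite big_cons.
by apply: good_add; [apply: good_mul => //; exact: good_cst|exact: IH].
Qed.

Lemma good_dv L : wfl L -> good Om (dv L).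
Proof.
rewrite /dv; elim: L => [_|p L IH] /=.
  by under [fun x => _]funext do rewrite big_nil; exact: good_cst.
move=> [[_ gp] wL]; under [fun x => _]funext do rewrite big_cons.
by apply: good_add; [apply: good_mul => //; exact: good_cst|exact: IH].
Qed.

Lemma dpoly_good H H' : dpoly H H' -> (forall s, good Om (H s)) /\ good Om H'.
Proof.
move=> [L [wL e1 e2]]; split.
  move=> s; have -> : H s = ev L s by apply/funext => x; rewrite e1.
  exact: good_ev.
have -> : H' = dv L by apply/funext => x; rewrite e2.
exact: good_dv.
Qed.

Lemma integ_ev L s : wfl L -> integ Om (ev L s) = \sum_(p <- L) p.1 s * integ Om p.2.
Proof.
elim: L => [_|p L IH] /=.
  rewrite big_nil -(integ0 mOm); apply: integ_ext => x _; by rewrite /ev big_nil.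
move=> [[_ gp] wL]; rewrite big_cons -IH // -integZ // -integD //.
- by apply: integ_ext => x _; rewrite /ev big_cons.
- by apply: good_mul => //; exact: good_cst.
- exact: good_ev.
Qed.

Lemma integ_dv L : wfl L -> integ Om (dv L) = \sum_(p <- L) derive1 p.1 t * integ Om p.2.
Proof.
elim: L => [_|p L IH] /=.
  rewrite big_nil -(integ0 mOm); apply: integ_ext => x _; by rewrite /dv big_nil.
move=> [[_ gp] wL]; rewrite big_cons -IH // -integZ // -integD //.
- by apply: integ_ext => x _; rewrite /dv big_cons.
- by apply: good_mul => //; exact: good_cst.
- exact: good_dv.
Qed.

Lemma deriv_lsum (L : seq PT) (k : PT -> R) : wfl L ->
  derivable (fun s => \sum_(p <- L) p.1 s * k p) t 1 /\
  derive1 (fun s => \sum_(p <- L) p.1 s * k p) t = \sum_(p <- L) derive1 p.1 t * k p.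
Proof.
elim: L => [_|p L IH] /=.
  have -> : (fun s => \sum_(p <- [::]) p.1 s * k p) = (fun _ => 0).
    by apply/funext => s; rewrite big_nil.
  by rewrite big_nil DC1; split => //; exact: dC1.
move=> [[dp _] wL]; have [d1 e1] := IH wL.
have -> : (fun s => \sum_(q <- p :: L) q.1 s * k q) =
   (fun s => (fun s => p.1 s * (fun _ => k p) s) s + (fun s => \sum_(q <- L) q.1 s * k q) s).
  by apply/funext => s; rewrite big_cons.
have dpk := dM1 dp (@dC1 _ (k p) t).
split; first exact: (dD1 dpk d1).
by rewrite (DD1 dpk d1) e1 big_cons (DM1 dp (@dC1 _ (k p) t)) DC1 mulr0 addr0.
Qed.

Lemma dpoly_deriv H H' : dpoly H H' ->
  derivable (fun s => integ Om (H s)) t 1 /\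
  derive1 (fun s => integ Om (H s)) t = integ Om H'.
Proof.
move=> [L [wL e1 e2]].
have -> : (fun s => integ Om (H s)) = (fun s => \sum_(p <- L) p.1 s * integ Om p.2).
  apply/funext => s; rewrite -integ_ev //; apply: integ_ext => x _; exact: e1.
have -> : integ Om H' = integ Om (dv L) by apply: integ_ext => x _; exact: e2.
rewrite integ_dv //; exact: (deriv_lsum (fun p => integ Om p.2)).
Qed.

End Poly.
Section Smooth.
Variable R : realType.

Lemma deriv_sp (I : Type) (L : seq I) (A B : I -> R * R -> R) (x v : R * R) :
  (forall p, derivable (A p) x v) -> (forall p, derivable (B p) x v) ->
  derivable (fun y => \sum_(p <- L) A p y * B p y) x v /\
  'D_v (fun y => \sum_(p <- L) A p y * B p y) x =
  \sum_(p <- L) ('D_v (A p) x * B p x + A p x * 'D_v (B p) x).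
Proof.
move=> dA dB; elim: L => [|p L [d1 e1]].
  have -> : (fun y => \sum_(p <- [::]) A p y * B p y) = (fun _ => 0).
    by apply/funext => y; rewrite big_nil.
  by rewrite big_nil DC2; split => //; exact: dC2.
have -> : (fun y => \sum_(q <- p :: L) A q y * B q y) =
   (fun y => (fun y => A p y * B p y) y + (fun y => \sum_(q <- L) A q y * B q y) y).
  by apply/funext => y; rewrite big_cons.
have dpk := dM2 (dA p) (dB p).
split; first exact: (dD2 dpk d1).
by rewrite (DD2 dpk d1) e1 big_cons (DM2 (dA p) (dB p)).
Qed.

Fixpoint lstep (i : 'I_2) (L : seq (seq 'I_2 * seq 'I_2)) :=
  match L with
  | [::] => [::]
  | pr :: L' => (i :: pr.1, pr.2) :: (pr.1, i :: pr.2) :: lstep i L'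
  end.

Lemma smooth_leib (f g : R * R -> R) : smooth f -> smooth g ->
  forall s, exists L : seq (seq 'I_2 * seq 'I_2),
  Defs.iterD s (fun x => f x * g x) = fun x => \sum_(pr <- L) Defs.iterD pr.1 f x * Defs.iterD pr.2 g x.
Proof.
move=> sf sg; elim => [|i s [L IH]].
  by exists [:: ([::], [::])]; apply/funext => x; rewrite big_seq1.
exists (lstep i L); rewrite /= IH; apply/funext => x; rewrite /partial.
have [_ ->] := @deriv_sp _ L (fun pr => Defs.iterD pr.1 f) (fun pr => Defs.iterD pr.2 g) x (e2 R i)
  (fun p => (sf p.1).2 i x) (fun p => (sg p.2).2 i x).
elim: L {IH} => [|pr L IH]; first by rewrite !big_nil.
by rewrite /= !big_cons IH addrA.
Qed.

Lemma smooth_mul (f g : R * R -> R) : smooth f -> smooth g ->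
  smooth (fun x => f x * g x).
Proof.
move=> sf sg s; have [L ->] := smooth_leib sf sg s; split.
  move=> x; elim: L => [|pr L IH].
    have -> : (fun x => \sum_(pr <- [::]) Defs.iterD pr.1 f x * Defs.iterD pr.2 g x) = cst (0 : R).
      by apply/funext => y; rewrite big_nil.
    exact: cst_continuous.
  have -> : (fun x => \sum_(q <- pr :: L) Defs.iterD q.1 f x * Defs.iterD q.2 g x) =
     (Defs.iterD pr.1 f * Defs.iterD pr.2 g) + (fun x => \sum_(q <- L) Defs.iterD q.1 f x * Defs.iterD q.2 g x).
    by apply/funext => y; rewrite big_cons.
  apply: continuousD => //; apply: continuousM; [exact: (sf _).1|exact: (sg _).1].
move=> i x.
by have [] := @deriv_sp _ L (fun pr => Defs.iterD pr.1 f) (fun pr => Defs.iterD pr.2 g) x (e2 R i)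
  (fun p => (sf p.1).2 i x) (fun p => (sg p.2).2 i x).
Qed.

Lemma partialM (f g : R * R -> R) (i : 'I_2) x : smooth f -> smooth g ->
  partial i (fun y => f y * g y) x = partial i f x * g x + f x * partial i g x.
Proof.
move=> sf sg; rewrite /partial.
exact: (DM2 ((sf [::]).2 i x) ((sg [::]).2 i x)).
Qed.

Lemma test_mul Om (f g : R * R -> R) : test_fun Om f -> test_fun Om g ->
  test_fun Om (fun x => f x * g x).
Proof.
move=> [sf [K [cK [KO fK]]]] [sg _]; split; first exact: smooth_mul.
by exists K; split => //; split => // x Kx; rewrite fK // mul0r.
Qed.

End Smooth.
Section Conv.
Variable R : realType.

Lemma absle_sq (p d : R) : 0 < d -> `|p| <= p ^+ 2 / d + d.
Proof.
move=> d0; have h : 0 <= (`|p| - d) ^+ 2 by exact: sqr_ge0.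
have e : p ^+ 2 = `|p| ^+ 2 by rewrite real_normK // num_real.
rewrite e -(@ler_pM2r _ d) // mulrDl mulfVK ?gt_eqF //.
have n0 : 0 <= `|p| by [].
nra.
Qed.

Lemma absmul_sq (p q : R) : `|p| * `|q| <= p ^+ 2 + q ^+ 2.
Proof.
have e1 : p ^+ 2 = `|p| ^+ 2 by rewrite real_normK // num_real.
have e2 : q ^+ 2 = `|q| ^+ 2 by rewrite real_normK // num_real.
rewrite e1 e2; have n0 : 0 <= `|p| by []; have n1 : 0 <= `|q| by [].
nra.
Qed.

Lemma ptw (A B d a f g fn gn : R) : 0 < d -> `|a| <= A -> `|f| <= B -> `|g| <= B ->
  `|a * fn * gn - a * f * g| <=
  A * (1 + B / d) * ((fn - f) ^+ 2 + (gn - g) ^+ 2) + 2 * A * B * d.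
Proof.
move=> d0 hA hf hg.
have B0 : 0 <= B by exact: le_trans hf.
have A0 : 0 <= A by exact: le_trans hA.
set p := fn - f; set q := gn - g.
have -> : a * fn * gn - a * f * g = a * (p * q + p * g + f * q).
  by rewrite /p /q; ring.
rewrite normrM; apply: le_trans (ler_pM _ _ hA (le_refl _)) _ => //.
have h1 : `|p * q + p * g + f * q| <= `|p| * `|q| + `|p| * B + B * `|q|.
  apply: le_trans (ler_normD _ _) _; apply: lerD; last first.
    by rewrite normrM ler_pM.
  apply: le_trans (ler_normD _ _) _; apply: lerD; first by rewrite normrM.
  by rewrite normrM ler_pM.
have h2 := absmul_sq p q.
have h3 := absle_sq p d0.
have h4 := absle_sq q d0.
have h5 : `|p| * `|q| + `|p| * B + B * `|q| <=
   (1 + B / d) * (p ^+ 2 + q ^+ 2) + 2 * B * d.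
  have e : (1 + B / d) * (p ^+ 2 + q ^+ 2) + 2 * B * d =
    (p ^+ 2 + q ^+ 2) + B * (p ^+ 2 / d + d) + B * (q ^+ 2 / d + d).
    by rewrite mulrDl mul1r mulrDr; ring.
  rewrite e; apply: lerD; first apply: lerD => //.
    by rewrite mulrC ler_pM.
  by rewrite ler_pM.
apply: le_trans (ler_pM _ _ (le_refl A) (le_trans h1 h5)) _ => //.
by rewrite mulrDr !mulrA [A * 2]mulrC.
Qed.

End Conv.
Section Conv2.
Variable R : realType.
Variable Om : set (R * R).
Hypothesis mOm : measurable (Om : set (T2 R)).
Hypothesis fOm : (lam2 Om < +oo)%E.

Lemma good_abs f : good Om f -> good Om (fun x => `|f x|).
Proof.
move=> [mf [M HM]]; split; last by exists M => x Ox; rewrite normr_id; exact: HM.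
exact: (measurableT_comp (@measurable_realfun.normr_measurable R setT) mf).
Qed.

Lemma good_sq f : good Om f -> good Om (fun x => f x ^+ 2).
Proof.
move=> gf; have -> : (fun x => f x ^+ 2) = (fun x => f x * f x).
  by apply/funext => x; rewrite expr2.
exact: good_mul.
Qed.

Lemma bound_prod3 (a f g fn gn : R * R -> R) (A B d : R) :
  good Om a -> good Om f -> good Om g -> good Om fn -> good Om gn -> 0 < d ->
  (forall x, Om x -> `|a x| <= A) -> (forall x, Om x -> `|f x| <= B) ->
  (forall x, Om x -> `|g x| <= B) ->
  `|integ Om (fun x => a x * fn x * gn x) - integ Om (fun x => a x * f x * g x)| <=
  A * (1 + B / d) * (integ Om (fun x => (fn x - f x) ^+ 2) + integ Om (fun x => (gn x - g x) ^+ 2))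
  + 2 * A * B * d * fine (lam2 Om).
Proof.
move=> ga gf gg gfn ggn d0 hA hf hg.
have g1 : good Om (fun x => a x * fn x * gn x) by apply: good_mul => //; exact: good_mul.
have g2 : good Om (fun x => a x * f x * g x) by apply: good_mul => //; exact: good_mul.
have g3 : good Om (fun x => (fn x - f x) ^+ 2) by apply: good_sq; exact: good_sub.
have g4 : good Om (fun x => (gn x - g x) ^+ 2) by apply: good_sq; exact: good_sub.
have g5 : good Om (fun x => (fn x - f x) ^+ 2 + (gn x - g x) ^+ 2) by exact: good_add.
rewrite -(integB mOm fOm g1 g2).
apply: le_trans (integ_abs mOm fOm (good_sub g1 g2)) _.
have g6 : good Om (fun x => A * (1 + B / d) * ((fn x - f x) ^+ 2 + (gn x - g x) ^+ 2)
   + 2 * A * B * d).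
  by apply: good_add; [apply: good_mul => //; exact: good_cst| exact: good_cst].
apply: le_trans (integ_le mOm fOm (good_abs (good_sub g1 g2)) g6 _) _.
  by move=> x Ox; apply: ptw => //; [exact: hA|exact: hf|exact: hg].
rewrite (integD mOm fOm (good_mul (good_cst _ _) g5) (good_cst _ _)).
rewrite (integZ mOm fOm _ g5) (integD mOm fOm g3 g4) (integ_cst mOm).
by [].
Qed.


Lemma cvg_prod3 (a f g : R * R -> R) (fn gn : nat -> R * R -> R) :
  good Om a -> good Om f -> good Om g ->
  (forall n, good Om (fn n)) -> (forall n, good Om (gn n)) ->
  (fun n => integ Om (fun x => (fn n x - f x) ^+ 2)) @ \oo --> (0 : R) ->
  (fun n => integ Om (fun x => (gn n x - g x) ^+ 2)) @ \oo --> (0 : R) ->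
  (fun n => integ Om (fun x => a x * fn n x * gn n x)) @ \oo -->
    integ Om (fun x => a x * f x * g x).
Proof.
move=> ga gf gg gfn ggn c1 c2.
have [A hA] := ga.2; have [Bf hBf] := gf.2; have [Bg hBg] := gg.2.
pose B := `|Bf| + `|Bg|.
have hA' : forall x, Om x -> `|a x| <= `|A|.
  by move=> x Ox; apply: le_trans (hA x Ox) (ler_norm _).
have hf : forall x, Om x -> `|f x| <= B.
  move=> x Ox; apply: le_trans (hBf x Ox) _; apply: le_trans (ler_norm _) _.
  by rewrite /B lerDl.
have hg : forall x, Om x -> `|g x| <= B.
  move=> x Ox; apply: le_trans (hBg x Ox) _; apply: le_trans (ler_norm _) _.
  by rewrite /B lerDr.
have B0 : 0 <= B by rewrite /B addr_ge0.
pose m := fine (lam2 Om).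
have m0 : 0 <= m by rewrite /m fine_ge0 // measure_ge0.
apply/cvgrPdist_lt => eps e0.
pose K0 := `|A| * B * m.
have K00 : 0 <= K0 by rewrite /K0 !mulr_ge0.
pose d := eps / (4 * (K0 + 1)).
have d0 : 0 < d by rewrite /d divr_gt0 // mulr_gt0 // ltr_wpDl.
have de : d * (4 * (K0 + 1)) = eps.
  by rewrite /d mulfVK // gt_eqF // mulr_gt0 // ltr_wpDl.
pose K := `|A| * (1 + B / d).
have K_0 : 0 <= K by rewrite /K mulr_ge0 // addr_ge0 // divr_ge0 // ltW.
pose eta := eps / (4 * (K + 1)).
have eta0 : 0 < eta by rewrite /eta divr_gt0 // mulr_gt0 // ltr_wpDl.
have etae : eta * (4 * (K + 1)) = eps.
  by rewrite /eta mulfVK // gt_eqF // mulr_gt0 // ltr_wpDl.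
move: c1 c2 => /cvgrPdist_lt /(_ eta eta0) c1 /cvgrPdist_lt /(_ eta eta0) c2.
apply: filterS2 c1 c2 => n E1 E2.
have bd := bound_prod3 ga gf gg (gfn n) (ggn n) d0 hA' hf hg.
rewrite distrC; apply: le_lt_trans bd _.
move: E1 E2; rewrite !sub0r !normrN.
set e1 := integ Om _; set e2 := integ Om _ => E1 E2.
have h1 : e1 <= `|e1| by exact: ler_norm.
have h2 : e2 <= `|e2| by exact: ler_norm.
have -> : 2 * `|A| * B * d * fine (lam2 Om) = 2 * K0 * d.
  by rewrite /K0 /m; ring.
rewrite -/K.
have hS : e1 + e2 < 2 * eta by lra.
nra.
Qed.

End Conv2.
Section Skew.
Variable R : realType.
Variable Om : set (R * R).
Hypothesis mOm : measurable (Om : set (T2 R)).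
Hypothesis fOm : (lam2 Om < +oo)%E.
Hypothesis hb : exists M : R, forall x, Om x -> `|x.1| <= M /\ `|x.2| <= M.

Lemma good_cont f : continuous f -> good Om f.
Proof. by move=> cf; split; [exact: cont_meas|exact: cont_bdd]. Qed.

Lemma test_good f : test_fun Om f -> good Om f.
Proof. by move=> [sf _]; apply: good_cont; exact: (sf [::]).1. Qed.

Lemma test_goodD f i : test_fun Om f -> good Om (partial i f).
Proof. by move=> [sf _]; apply: good_cont; exact: (sf [:: i]).1. Qed.

Lemma vdot_convec (u : 'rV[R]_2) (J : 'M[R]_2) :
  vdot (convec u J) u = \sum_(i < 2) \sum_(j < 2) u 0 i * u 0 j * J i j.
Proof.
rewrite /vdot /convec; apply: eq_bigr => i _; rewrite !mxE mulr_suml.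
by apply: eq_bigr => j _; rewrite !mxE; ring.
Qed.

Lemma tr_vdot (u : 'rV[R]_2) (J : 'M[R]_2) :
  \tr J * vdot u u = \sum_(i < 2) \sum_(j < 2) u 0 i * J j j * u 0 i.
Proof.
rewrite /vdot /mxtrace mulr_sumr; apply: eq_bigr => i _ /=; rewrite mulr_suml.
by apply: eq_bigr => j _; ring.
Qed.

Lemma skew0 (U : R * R -> 'rV[R]_2) (J : R * R -> 'M[R]_2) :
  (forall c, good Om (fun x => U x 0 c)) ->
  (forall c i, good Om (fun x => J x c i)) ->
  (forall c i, weak_partial Om (fun x => U x 0 c) i (fun x => J x c i)) ->
  H10 Om U J -> ctri Om U J U J U = 0.
Proof.
move=> gU gJ wU [phi [tphi cphi]].
pose X i j := integ Om (fun x => U x 0 i * U x 0 j * J x i j).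
pose Y i j := integ Om (fun x => U x 0 i * J x j j * U x 0 i).
have key : forall i j, Y i j + X i j = - X i j.
  move=> i j.
  pose Yn n := integ Om (fun x => U x 0 i * partial j (phi n j) x * phi n i x).
  pose Xn n := integ Om (fun x => U x 0 i * phi n j x * partial j (phi n i) x).
  pose Zn n := integ Om (fun x => J x i j * phi n j x * phi n i x).
  have eqn : forall n, Yn n + Xn n = - Zn n.
    move=> n; have tp := test_mul (tphi n j) (tphi n i).
    have w := wU i j _ tp.
    have gt := test_good (tphi n j); have gt' := test_good (tphi n i).
    have gd := test_goodD j (tphi n j); have gd' := test_goodD j (tphi n i).
    rewrite /Yn /Xn /Zn -(integD mOm fOm); first last.
    - by apply: good_mul => //; exact: good_mul.
    - by apply: good_mul => //; exact: good_mul.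
    rewrite (@integ_ext _ _ _ (fun x => U x 0 i * partial j (fun y => phi n j y * phi n i y) x)).
      rewrite w; congr (- _); apply: integ_ext => x _; ring.
    move=> x _; rewrite (partialM _ _ (tphi n j).1 (tphi n i).1); ring.
  have cY : Yn @ \oo --> Y i j.
    apply: cvg_prod3 => //; first by move=> n; exact: test_goodD.
    - by move=> n; exact: test_good.
    - exact: ((cphi j).2 j).
    - exact: (cphi i).1.
  have cX : Xn @ \oo --> X i j.
    apply: cvg_prod3 => //; first by move=> n; exact: test_good.
    - by move=> n; exact: test_goodD.
    - exact: (cphi j).1.
    - exact: ((cphi i).2 j).
  have cZ : Zn @ \oo --> X i j.
    have -> : X i j = integ Om (fun x => J x i j * U x 0 j * U x 0 i).
      by apply: integ_ext => x _; ring.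
    apply: cvg_prod3 => //; first by move=> n; exact: test_good.
    - by move=> n; exact: test_good.
    - exact: (cphi j).1.
    - exact: (cphi i).1.
  have c1 : (fun n => Yn n + Xn n) @ \oo --> Y i j + X i j by exact: cvgD.
  have c2 : (fun n => Yn n + Xn n) @ \oo --> - X i j.
    by under eq_fun do rewrite eqn; exact: cvgN.
  exact: (cvg_unique _ c1 c2).
have gX : forall i j, good Om (fun x => U x 0 i * U x 0 j * J x i j).
  by move=> i j; do 2 apply: good_mul => //.
have gY : forall i j, good Om (fun x => U x 0 i * J x j j * U x 0 i).
  by move=> i j; do 2 apply: good_mul => //.
rewrite /ctri.
rewrite (@integ_ext _ _ _ (fun x => \sum_(i < 2) \sum_(j < 2) U x 0 i * U x 0 j * J x i j));
  last by move=> x _; exact: vdot_convec.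
rewrite (@integ_ext _ _ (fun x => \tr (J x) * vdot (U x) (U x))
   (fun x => \sum_(i < 2) \sum_(j < 2) U x 0 i * J x j j * U x 0 i));
  last by move=> x _; exact: tr_vdot.
rewrite !(integ_sum mOm fOm); last 2 first.
- by move=> i; apply: good_sum.
- by move=> i; apply: good_sum.
under eq_bigr do rewrite (integ_sum mOm fOm) //.
under [X in _ * X]eq_bigr do rewrite (integ_sum mOm fOm) //.
rewrite mulr_sumr -big_split big1 // => i _.
rewrite mulr_sumr -big_split big1 // => j _.
have := key i j; rewrite /X /Y => k /=; lra.
Qed.
End Skew.
Section Helpers.
Variable R : realType.
Variable Om : set (R * R).
Hypothesis mOm : measurable (Om : set (T2 R)).
Hypothesis fOm : (lam2 Om < +oo)%E.
Hypothesis hb : exists M : R, forall x, Om x -> `|x.1| <= M /\ `|x.2| <= M.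

Lemma lcv_comp n m p (a : 'I_n -> R) (b : 'I_n -> R * R -> 'M[R]_(m, p)) x i j :
  lcv a b x i j = \sum_(k < n) a k * b k x i j.
Proof. by rewrite /lcv summxE; apply: eq_bigr => k _; rewrite mxE. Qed.

Lemma good_lcs n (a : 'I_n -> R) (b : 'I_n -> R * R -> R) :
  (forall k, good Om (b k)) -> good Om (lcs a b).
Proof. by move=> gb; apply: good_sum => k; apply: good_mul => //; exact: good_cst. Qed.

Lemma good_lcv n m p (a : 'I_n -> R) (b : 'I_n -> R * R -> 'M[R]_(m, p)) i j :
  (forall k, good Om (fun x => b k x i j)) -> good Om (fun x => lcv a b x i j).
Proof.
move=> gb; have -> : (fun x => lcv a b x i j) = (fun x => \sum_(k < n) a k * b k x i j).
  by apply/funext => x; exact: lcv_comp.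
by apply: good_sum => k; apply: good_mul => //; exact: good_cst.
Qed.

Lemma vdotC (a b : 'rV[R]_2) : vdot a b = vdot b a.
Proof. by rewrite /vdot; apply: eq_bigr => i _; rewrite mulrC. Qed.

Lemma good_vdot (f g : R * R -> 'rV[R]_2) :
  (forall c, good Om (fun x => f x 0 c)) -> (forall c, good Om (fun x => g x 0 c)) ->
  good Om (fun x => vdot (f x) (g x)).
Proof. by move=> gf gg; apply: good_sum => c; exact: good_mul. Qed.

Lemma weak_lin n (a : 'I_n -> R) (f : 'I_n -> R * R -> R) (g : 'I_n -> R * R -> R) i :
  (forall k, good Om (f k)) -> (forall k, good Om (g k)) ->
  (forall k, weak_partial Om (f k) i (g k)) ->
  weak_partial Om (fun x => \sum_(k < n) a k * f k x) i (fun x => \sum_(k < n) a k * g k x).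
Proof.
move=> gf gg wf phi tp.
have g1 := test_good hb tp; have g2 := test_goodD hb i tp.
rewrite (@integ_ext _ _ _ (fun x => \sum_(k < n) a k * (f k x * partial i phi x))); last first.
  by move=> x _; rewrite mulr_suml; apply: eq_bigr => k _; ring.
rewrite (@integ_ext _ _ (fun x => (\sum_(k < n) a k * g k x) * phi x)
   (fun x => \sum_(k < n) a k * (g k x * phi x))); last first.
  by move=> x _; rewrite mulr_suml; apply: eq_bigr => k _; ring.
rewrite !(integ_sum mOm fOm); last 2 first.
- by move=> k; apply: good_mul; [exact: good_cst|exact: good_mul].
- by move=> k; apply: good_mul; [exact: good_cst|exact: good_mul].
rewrite -sumrN; apply: eq_bigr => k _.
rewrite !(integZ mOm fOm); [|exact: good_mul|exact: good_mul].
by rewrite (wf k _ tp) mulrN.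
Qed.

Variable t : R.

Lemma dpoly_lcv n (a : 'I_n -> R -> R) (b : 'I_n -> R * R -> 'rV[R]_2) c :
  (forall k, derivable (a k) t 1) -> (forall k, good Om (fun x => b k x 0 c)) ->
  dpoly Om t (fun s x => lcv (fun k => a k s) b x 0 c)
             (fun x => lcv (fun k => derive1 (a k) t) b x 0 c).
Proof.
move=> da gb.
apply: (@dpoly_ext _ _ _ (fun s x => \sum_(k < n) a k s * b k x 0 c)
                         (fun x => \sum_(k < n) derive1 (a k) t * b k x 0 c)).
- by apply: dpoly_sum => k; exact: dpoly_coef.
- by move=> s x; rewrite lcv_comp.
- by move=> x; rewrite lcv_comp.
Qed.

Lemma dpoly_lcs n (a : 'I_n -> R -> R) (b : 'I_n -> R * R -> R) :
  (forall k, derivable (a k) t 1) -> (forall k, good Om (b k)) ->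
  dpoly Om t (fun s x => lcs (fun k => a k s) b x)
             (fun x => lcs (fun k => derive1 (a k) t) b x).
Proof.
move=> da gb; rewrite /lcs.
by apply: dpoly_sum => k; exact: dpoly_coef.
Qed.

Lemma dpoly_vdot (V1 V2 : R -> R * R -> 'rV[R]_2) (V1' V2' : R * R -> 'rV[R]_2) :
  (forall c, dpoly Om t (fun s x => V1 s x 0 c) (fun x => V1' x 0 c)) ->
  (forall c, dpoly Om t (fun s x => V2 s x 0 c) (fun x => V2' x 0 c)) ->
  dpoly Om t (fun s x => vdot (V1 s x) (V2 s x))
    (fun x => vdot (V1' x) (V2 t x) + vdot (V1 t x) (V2' x)).
Proof.
move=> d1 d2.
apply: (@dpoly_ext _ _ _ (fun s x => \sum_(i < 2) V1 s x 0 i * V2 s x 0 i)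
   (fun x => \sum_(i < 2) (V1' x 0 i * V2 t x 0 i + V1 t x 0 i * V2' x 0 i))).
- by apply: dpoly_sum => c; exact: dpoly_mul.
- by [].
- by move=> x; rewrite /vdot big_split.
Qed.

End Helpers.
Lemma dlin (R : realType) (c1 c2 : R) (f g : R -> R) x :
  derivable f x 1 -> derivable g x 1 ->
  derivable (fun y => c1 * f y + c2 * g y) x 1 /\
  derive1 (fun y => c1 * f y + c2 * g y) x = c1 * derive1 f x + c2 * derive1 g x.
Proof.
move=> df dg.
have d1 := dM1 (@dC1 _ c1 x) df; have d2 := dM1 (@dC1 _ c2 x) dg.
split; first exact: (dD1 d1 d2).
by rewrite (DD1 d1 d2) (DM1 (@dC1 _ c1 x) df) (DM1 (@dC1 _ c2 x) dg) !DC1 !mul0r !add0r.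
Qed.

Lemma vdotZ (R : realType) (a : R) (n m : 'rV[R]_2) : vdot (a *: n) m = a * vdot n m.
Proof. by rewrite /vdot mulr_sumr; apply: eq_bigr => i _; rewrite mxE mulrA. Qed.

Lemma dpoly_neg (R : realType) (Om : set (R * R)) t H H' :
  dpoly Om t H H' -> dpoly Om t (fun s x => - H s x) (fun x => - H' x).
Proof.
move=> d; apply: dpoly_ext; first exact: (dpoly_mul (dpoly_const t (good_cst Om (-1))) d).
- by move=> s x /=; rewrite mulN1r.
- by move=> x /=; rewrite mul0r add0r mulN1r.
Qed.

Theorem mainTheorem1 (R : realType) (Om : set (R * R))
  (mu1 mu4 mu5 lambda gamma eps : R)
  (nu np nf ns : nat)
  (bu : 'I_nu -> R * R -> 'rV[R]_2) (Ju : 'I_nu -> R * R -> 'M[R]_2)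
  (bp : 'I_np -> R * R -> R)
  (bf : 'I_nf -> R * R -> R) (gf : 'I_nf -> R * R -> 'rV[R]_2)
  (bs : 'I_ns -> R * R -> R) (gs : 'I_ns -> R * R -> 'rV[R]_2)
  (t0 t1 : R)
  (au : 'I_nu -> R -> R) (ap : 'I_np -> R -> R)
  (af : 'I_nf -> R -> R) (aps : 'I_ns -> R -> R) :
  (* Om is a bounded domain of R^2 *)
  open Om -> connected Om ->
  (exists M : R, forall x, Om x -> `|x.1| <= M /\ `|x.2| <= M) ->
  0 < lambda -> 0 < gamma -> 0 < eps ->
  (* spanning families of the conforming spaces U_h, P_h, Phi_h, Psi_h *)
  (forall k, fe_vector Om (bu k) (Ju k)) ->
  (forall k, L2 Om (bp k)) ->
  (forall k, fe_scalar Om (bf k) (gf k)) ->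
  (forall k, fe_scalar Om (bs k) (gs k)) ->
  let I := [set t : R | t0 < t < t1] in
  (* the discrete solution and its time derivatives *)
  let u t := lcv (fun k => au k t) bu in
  let Jac t := lcv (fun k => au k t) Ju in
  let u_t t := lcv (fun k => derive1 (au k) t) bu in
  let p t := lcs (fun k => ap k t) bp in
  let phi_t t := lcs (fun k => derive1 (af k) t) bf in
  let gphi t := lcv (fun k => af k t) gf in
  let psi t := lcs (fun k => aps k t) bs in
  let gpsi t := lcv (fun k => aps k t) gs in
  (forall k, C1_on I (au k)) ->
  (forall k, C1_on I (af k)) ->
  (forall k, C1_on I (aps k)) ->
  (forall t, I t -> H10 Om (u t) (Jac t) /\ mean_zero Om (p t)) ->
  (* the space-discrete scheme *)
  (forall t, I t ->
   forall (cu : 'I_nu -> R) (cp : 'I_np -> R) (cf : 'I_nf -> R) (cs : 'I_ns -> R),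
   let ub := lcv cu bu in
   let Jb := lcv cu Ju in
   let pb := lcs cp bp in
   let phib := lcs cf bf in
   let gphib := lcv cf gf in
   let psib := lcs cs bs in
   let gpsib := lcv cs gs in
   H10 Om ub Jb -> mean_zero Om pb ->
   [/\ integ Om (fun x => vdot (u_t t x) (ub x))
       + ctri Om (u t) (Jac t) (u t) (Jac t) ub
       + integ Om (fun x => mdot (sigma_d mu1 mu4 mu5 (symgrad (Jac t x)) (gphi t x))
                                (symgrad (Jb x)))
       - integ Om (fun x => p t x * \tr (Jb x))
       + lambda / gamma *
           integ Om (fun x => (phi_t t x + vdot (u t x) (gphi t x)) * vdot (gphi t x) (ub x))
       = 0,
     integ Om (fun x => \tr (Jac t x) * pb x) = 0,
     gamma^-1 * integ Om (fun x => (phi_t t x + vdot (u t x) (gphi t x)) * phib x)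
       + integ Om (fun x => vdot (gpsi t x) (gphib x))
       + (eps ^+ 2)^-1 * integ Om (fun x => vdot (fpot (gphi t x)) (gphib x))
       = 0 &
     integ Om (fun x => vdot (gphi t x) (gpsib x)) - integ Om (fun x => psi t x * psib x)
       = 0]) ->
  (* energy law *)
  forall t, I t ->
  let E s := Etot Om lambda eps (u s) (gphi s) (psi s) in
  derivable E t 1 /\
  derive1 E t
  + integ Om (fun x => mdot (sigma_d mu1 mu4 mu5 (symgrad (Jac t x)) (gphi t x))
                           (symgrad (Jac t x)))
  + lambda / gamma * integ Om (fun x => (phi_t t x + vdot (u t x) (gphi t x)) ^+ 2)
  = 0.
Proof.
move=> oOm _ hb lam0 gam0 eps0 hbu _ hbf hbs I u Jac u_t p phi_t gphi psi gpsi
  Cu Cf Cs H10p scheme t It E.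
have mOm := open_meas oOm.
have fOm := lam2_fin hb mOm.
have du : forall k, derivable (au k) t 1 by move=> k; exact: (Cu k).1.
have df : forall k, derivable (af k) t 1 by move=> k; exact: (Cf k).1.
have ds : forall k, derivable (aps k) t 1 by move=> k; exact: (Cs k).1.
have gbu : forall k c, good Om (fun x => bu k x 0 c).
  by move=> k c; have [h1 [h2 _]] := hbu k c.
have gJu : forall k c i, good Om (fun x => Ju k x c i).
  move=> k c i; have [_ [_ h]] := hbu k c; have [h1 [h2 _]] := h i.
  have -> : (fun x => Ju k x c i) = (fun x => row c (Ju k x) 0 i).
    by apply/funext => x; rewrite mxE.
  by [].
have wJu : forall k c i, weak_partial Om (fun x => bu k x 0 c) i (fun x => Ju k x c i).
  move=> k c i; have [_ [_ h]] := hbu k c; have [_ [_ h3]] := h i.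
  have -> : (fun x => Ju k x c i) = (fun x => row c (Ju k x) 0 i).
    by apply/funext => x; rewrite mxE.
  by [].
have gbf : forall k, good Om (bf k) by move=> k; have [h1 [h2 _]] := hbf k.
have ggf : forall k c, good Om (fun x => gf k x 0 c).
  by move=> k c; have [_ [_ h]] := hbf k; have [h1 [h2 _]] := h c.
have gbs : forall k, good Om (bs k) by move=> k; have [h1 [h2 _]] := hbs k.
have ggs : forall k c, good Om (fun x => gs k x 0 c).
  by move=> k c; have [_ [_ h]] := hbs k; have [h1 [h2 _]] := h c.
have gU : forall s c, good Om (fun x => u s x 0 c) by move=> s c; exact: good_lcv.
have gUt : forall c, good Om (fun x => u_t t x 0 c) by move=> c; exact: good_lcv.
have gJ : forall c i, good Om (fun x => Jac t x c i) by move=> c i; exact: good_lcv.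
have gN : forall s c, good Om (fun x => gphi s x 0 c) by move=> s c; exact: good_lcv.
pose Nt := lcv (fun k => derive1 (af k) t) gf.
have gNt : forall c, good Om (fun x => Nt x 0 c) by move=> c; exact: good_lcv.
have gGS : forall c, good Om (fun x => gpsi t x 0 c) by move=> c; exact: good_lcv.
have gPt : good Om (phi_t t) by exact: good_lcs.
have gS : forall s, good Om (psi s) by move=> s; exact: good_lcs.
pose St := lcs (fun k => derive1 (aps k) t) bs.
have gSt : good Om St by exact: good_lcs.
have gW : good Om (fun x => phi_t t x + vdot (u t x) (gphi t x)).
  by apply: good_add => //; exact: good_vdot.
have sk : ctri Om (u t) (Jac t) (u t) (Jac t) (u t) = 0.
  apply: (skew0 mOm fOm hb) => //; last exact: (H10p t It).1.
  move=> c i.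
  have -> : (fun x => u t x 0 c) = (fun x => \sum_(k < nu) au k t * bu k x 0 c).
    by apply/funext => x; rewrite /u lcv_comp.
  have -> : (fun x => Jac t x c i) = (fun x => \sum_(k < nu) au k t * Ju k x c i).
    by apply/funext => x; rewrite /Jac lcv_comp.
  by apply: weak_lin.
have [S1 S2 S3 _] := scheme t It (fun k => au k t) (fun k => ap k t)
  (fun k => derive1 (af k) t) (fun k => aps k t) (H10p t It).1 (H10p t It).2.
have E1 : integ Om (fun x => vdot (u_t t x) (u t x))
       + ctri Om (u t) (Jac t) (u t) (Jac t) (u t)
       + integ Om (fun x => mdot (sigma_d mu1 mu4 mu5 (symgrad (Jac t x)) (gphi t x))
                                (symgrad (Jac t x)))
       - integ Om (fun x => p t x * \tr (Jac t x))
       + lambda / gamma *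
           integ Om (fun x => (phi_t t x + vdot (u t x) (gphi t x)) * vdot (gphi t x) (u t x))
       = 0 by exact: S1.
have E2 : integ Om (fun x => \tr (Jac t x) * p t x) = 0 by exact: S2.
have E3 : gamma^-1 * integ Om (fun x => (phi_t t x + vdot (u t x) (gphi t x)) * phi_t t x)
       + integ Om (fun x => vdot (gpsi t x) (Nt x))
       + (eps ^+ 2)^-1 * integ Om (fun x => vdot (fpot (gphi t x)) (Nt x))
       = 0 by exact: S3.
have E4 : forall s, I s -> integ Om (fun x => vdot (gphi s x) (gpsi t x))
    - integ Om (fun x => psi s x * psi t x) = 0.
  move=> s Is; have [_ _ _ h] := scheme s Is (fun k => au k s) (fun k => ap k s)
    (fun k => 0) (fun k => aps k t) (H10p s Is).1 (H10p s Is).2.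
  exact: h.
(* time derivative of the fourth equation *)
have dG : dpoly Om t (fun s x => vdot (gphi s x) (gpsi t x) + - (psi s x * psi t x))
    (fun x => vdot (Nt x) (gpsi t x) + - (St x * psi t x)).
  apply: dpoly_add.
    apply: dpoly_ext.
    - apply: (@dpoly_vdot _ Om t gphi (fun _ => gpsi t) Nt (fun _ => 0)).
        by move=> c; exact: dpoly_lcv.
      move=> c; apply: dpoly_ext; first exact: (dpoly_const t (gGS c)).
        by [].
      by move=> x; rewrite mxE.
    - by [].
    - move=> x /=; rewrite [vdot (gphi t x) 0](_ : _ = 0) ?addr0 //.
      by rewrite /vdot big1 // => i _; rewrite mxE mulr0.
  apply: dpoly_neg; apply: dpoly_ext.
  - exact: (dpoly_mul (dpoly_lcs ds gbs) (dpoly_const t (gS t))).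
  - by [].
  - by move=> x /=; rewrite mulr0 addr0.
have [_ eG] := dpoly_deriv mOm fOm dG.
have nearI : \forall s \near t, I s.
  have : t \in `]t0, t1[ by rewrite in_itv /=.
  move=> /near_in_itvoo; apply: filterS => s; by rewrite in_itv /=.
have zG : derive1 (fun s => integ Om (fun x => vdot (gphi s x) (gpsi t x) + - (psi s x * psi t x))) t = 0.
  rewrite derive1E (@near_eq_derive _ _ _ _ (cst 0)); first exact: derive_cst.
  apply: filterS nearI => s Is /=.
  have g1 : good Om (fun x => vdot (gphi s x) (gpsi t x)) by exact: good_vdot.
  have g2 : good Om (fun x => psi s x * psi t x) by exact: good_mul.
  rewrite (integD mOm fOm g1 (good_opp g2)) (integN mOm fOm g2).
  exact: E4.
rewrite zG in eG.
have E4' : integ Om (fun x => vdot (Nt x) (gpsi t x)) = integ Om (fun x => St x * psi t x).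
  have g1 : good Om (fun x => vdot (Nt x) (gpsi t x)) by exact: good_vdot.
  have g2 : good Om (fun x => St x * psi t x) by exact: good_mul.
  move: eG; rewrite (integD mOm fOm g1 (good_opp g2)) (integN mOm fOm g2); lra.
have dHU : dpoly Om t (fun s x => vdot (u s x) (u s x))
    (fun x => vdot (u_t t x) (u t x) + vdot (u t x) (u_t t x)).
  by apply: dpoly_vdot => c; exact: dpoly_lcv.
have dHP : dpoly Om t (fun s x => psi s x ^+ 2) (fun x => St x * psi t x + psi t x * St x).
  apply: dpoly_ext; first exact: (dpoly_mul (dpoly_lcs ds gbs) (dpoly_lcs ds gbs)).
    by move=> s x; rewrite expr2.
  by [].
have dQ : dpoly Om t (fun s x => vdot (gphi s x) (gphi s x) + -1)
    (fun x => (vdot (Nt x) (gphi t x) + vdot (gphi t x) (Nt x)) + 0).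
  apply: dpoly_add; last exact: (dpoly_const t (good_cst Om (-1))).
  by apply: dpoly_vdot => c; exact: dpoly_lcv.
have dHF : dpoly Om t (fun s x => Fpot (gphi s x)) (fun x => vdot (fpot (gphi t x)) (Nt x)).
  apply: dpoly_ext; first exact: (dpoly_mul (dpoly_const t (good_cst Om (4^-1))) (dpoly_mul dQ dQ)).
    by move=> s x /=; rewrite /Fpot expr2.
  move=> x /=; rewrite /fpot vdotZ (vdotC (Nt x)).
  set a := vdot _ (Nt x); set b := vdot (gphi t x) (gphi t x).
  by field.
have [dU eU] := dpoly_deriv mOm fOm dHU.
have [dP eP] := dpoly_deriv mOm fOm dHP.
have [dF eF] := dpoly_deriv mOm fOm dHF.
have [dIn eIn] := dlin (2^-1) ((eps ^+ 2)^-1) dP dF.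
have [dE eE] := dlin (2^-1) lambda dU dIn.
have Edef : E = (fun y => 2^-1 * integ Om (fun x => vdot (u y x) (u y x)) + lambda *
   (fun y => 2^-1 * integ Om (fun x => psi y x ^+ 2)
             + (eps ^+ 2)^-1 * integ Om (fun x => Fpot (gphi y x))) y) by [].
rewrite Edef; split; first exact: dE.
rewrite eE eIn eU eP eF.
have gUU : good Om (fun x => vdot (u_t t x) (u t x)) by exact: good_vdot.
have hU2 : integ Om (fun x => vdot (u_t t x) (u t x) + vdot (u t x) (u_t t x)) =
    2 * integ Om (fun x => vdot (u_t t x) (u t x)).
  rewrite -(integZ mOm fOm _ gUU); apply: integ_ext => x _.
  by rewrite (vdotC (u t x)); ring.
have gSS : good Om (fun x => St x * psi t x) by exact: good_mul.
have hP2 : integ Om (fun x => St x * psi t x + psi t x * St x) =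
    2 * integ Om (fun x => St x * psi t x).
  rewrite -(integZ mOm fOm _ gSS); apply: integ_ext => x _; ring.
have gW1 : good Om (fun x => (phi_t t x + vdot (u t x) (gphi t x)) * phi_t t x).
  exact: good_mul.
have gW2 : good Om (fun x => (phi_t t x + vdot (u t x) (gphi t x)) * vdot (gphi t x) (u t x)).
  by apply: good_mul => //; exact: good_vdot.
have hW2 : integ Om (fun x => (phi_t t x + vdot (u t x) (gphi t x)) ^+ 2) =
    integ Om (fun x => (phi_t t x + vdot (u t x) (gphi t x)) * phi_t t x)
    + integ Om (fun x => (phi_t t x + vdot (u t x) (gphi t x)) * vdot (gphi t x) (u t x)).
  rewrite -(integD mOm fOm gW1 gW2); apply: integ_ext => x _.
  by rewrite (vdotC (gphi t x)); ring.
have hGS : integ Om (fun x => vdot (gpsi t x) (Nt x)) = integ Om (fun x => vdot (Nt x) (gpsi t x)).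
  by apply: integ_ext => x _; rewrite vdotC.
have hPJ : integ Om (fun x => p t x * \tr (Jac t x)) = integ Om (fun x => \tr (Jac t x) * p t x).
  by apply: integ_ext => x _; rewrite mulrC.
rewrite hU2 hP2 hW2.
rewrite hPJ E2 sk in E1.
rewrite hGS E4' in E3.
set A := integ Om (fun x => vdot (u_t t x) (u t x)) in E1 *.
set B := integ Om (fun x => St x * psi t x) in E3 *.
set F := integ Om (fun x => vdot (fpot (gphi t x)) (Nt x)) in E3 *.
set X := integ Om (fun x => (phi_t t x + vdot (u t x) (gphi t x)) * phi_t t x) in E3 *.
set Y := integ Om (fun x => (phi_t t x + vdot (u t x) (gphi t x)) * vdot (gphi t x) (u t x)) in E1 *.
have K3 : lambda * (gamma^-1 * X + B + (eps ^+ 2)^-1 * F) = 0 by rewrite E3 mulr0.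
set Sg := integ Om (fun x => mdot _ _) in E1 *.
have -> : 2^-1 * (2 * A) + lambda * (2^-1 * (2 * B) + (eps ^+ 2)^-1 * F) + Sg
   + lambda / gamma * (X + Y) =
   (A + 0 + Sg - 0 + lambda / gamma * Y) + lambda * (gamma^-1 * X + B + (eps ^+ 2)^-1 * F).
  have g0 : gamma != 0 by rewrite gt_eqF.
  have e0 : eps != 0 by rewrite gt_eqF.
  by field; rewrite e0 g0.
lra.
Qed.
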